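(* Let $U\in U(2)$ and $\epsilon>0$ be fixed. Then for every number of control qubits $n_c$, an approximate decomposition of the $n_c$-controlled gate $C^{n_c}U$ up to error $\epsilon$ can be constructed on $n=n_c+1$ qubits without auxiliary qubits using a number of CNOT gates that is linear in $n$ (i.e., $O(n)$, with the constant depending on $U$ and $\epsilon$ but not on $n$).
   Context: $C^{n_c}U$ denotes the $(n_c+1)$-qubit gate with control qubits $c_1,\dots,c_{n_c}$ and target qubit $t$ that applies $U$ to $t$ when all controls are in state $|1\rangle$ and the identity otherwise. An approximate decomposition up to error $\epsilon$ is a circuit of CNOT and single-qubit gates on these $n_c+1$ qubits such that, for each computational basis state $x$ of the controls, the operator $V_x$ applied to the target satisfies $\|V_x-U\|_{\max}\le\epsilon$ if $x=1\cdots1$ and $\|V_x-I\|_{\max}\le\epsilon$ otherwise, where $\|M\|_{\max}=\max_{i,j}|M_{ij}|$. *)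

(* Defs.v *)
From mathcomp Require Import all_boot all_algebra.
From mathcomp Require Import Rstruct.
From mathcomp.real_closed Require Export complex.
From mathcomp Require Export spectral.
Set Implicit Arguments.
Unset Strict Implicit.
Unset Printing Implicit Defensive.
Import GRing.Theory Num.Theory.
Local Open Scope ring_scope.

Notation R := Rdefinitions.R.
Notation C := (R[i]).

(* Computational basis of n qubits: indices x : 'I_(2^n);
   the state of qubit k in basis state x is bit k of x. *)
Definition qbit (x : nat) (k : nat) : bool := odd (x %/ 2 ^ k).
Definition b2o (b : bool) : 'I_2 := inord (nat_of_bool b).

Inductive gate (n : nat) : Type :=
| CNOT (c t : 'I_n) of c != t
| Single (q : 'I_n) (u : 'M[C]_2) of u \is unitarymx.

Definition is_cnot n (g : gate n) : bool :=
  if g is CNOT _ _ _ then true else false.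

(* Matrix of a gate; entry (x, y) = <x| G |y>  (row = output basis state). *)
Definition gate_mx n (g : gate n) : 'M[C]_(2 ^ n) :=
  match g with
  | CNOT c t _ =>
      \matrix_(x, y) (([forall k : 'I_n,
          qbit x k == (if (k == t) && qbit y c then ~~ qbit y k else qbit y k)])%:R : C)
  | Single q u _ =>
      \matrix_(x, y) (if [forall k : 'I_n, (k != q) ==> (qbit x k == qbit y k)]
                      then u (b2o (qbit x q)) (b2o (qbit y q)) else 0)
  end.

(* A circuit is a sequence of gates, the head being applied first. *)
Definition circuit n := seq (gate n).

Fixpoint circuit_mx n (c : circuit n) : 'M[C]_(2 ^ n) :=
  match c with
  | [::] => 1%:M
  | g :: c' => circuit_mx c' *m gate_mx g
  end.

Definition cnot_count n (c : circuit n) : nat := count (@is_cnot n) c.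

(* Basis state of nc.+1 qubits with controls (qubits 0..nc-1) in state x
   and target (qubit nc) in state a. *)
Lemma idx_proof nc (x : 'I_(2 ^ nc)) (a : 'I_2) : (x + a * 2 ^ nc < 2 ^ nc.+1)%N.
Proof.
case: a => [[|[|a]] //= Ha].
- by rewrite mul0n addn0 expnS (leq_trans (ltn_ord x)) // leq_pmull.
- by rewrite mul1n expnS mul2n -addnn ltn_add2r.
Qed.
Definition idx nc (x : 'I_(2 ^ nc)) (a : 'I_2) : 'I_(2 ^ nc.+1) :=
  Ordinal (idx_proof x a).

Definition max_close (A B : 'M[C]_2) (eps : R) : Prop :=
  forall a b : 'I_2, `|A a b - B a b| <= (eps%:C)%C.

(* M (on nc.+1 qubits, controls 0..nc-1, target nc) is an approximate
   decomposition of C^{nc}U up to eps: it acts as  sum_x |x><x| (x) V_x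
   with V_x eps-close to U when x = 1...1 and to I otherwise. *)
Definition approx_CnU nc (U : 'M[C]_2) (eps : R) (M : 'M[C]_(2 ^ nc.+1)) : Prop :=
  (forall (x y : 'I_(2 ^ nc)) (a b : 'I_2), x != y -> M (idx x a) (idx y b) = 0)
  /\ forall x : 'I_(2 ^ nc),
      let V := \matrix_(a < 2, b < 2) M (idx x a) (idx x b) in
      max_close V (if val x == (2 ^ nc).-1 then U else 1%:M) eps.

(* Main.v *)
Require Import Defs.
From mathcomp Require Import all_boot all_order all_algebra Rstruct zify ring.
Import Order.TTheory GRing.Theory Num.Theory.
Local Open Scope ring_scope.
Local Open Scope sesquilinear_scope.
Set Implicit Arguments.
Unset Strict Implicit.
Unset Printing Implicit Defensive.

Lemma qbit0 x : qbit x 0 = odd x.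
Proof. by rewrite /qbit expn0 divn1. Qed.

Lemma qbitS x k : qbit x k.+1 = qbit x./2 k.
Proof. by rewrite /qbit expnS divnMA divn2. Qed.

Lemma qbit_inj_nat m : forall x y, (x < 2 ^ m)%N -> (y < 2 ^ m)%N ->
  (forall k, (k < m)%N -> qbit x k = qbit y k) -> x = y.
Proof.
elim: m => [|m IH] x y.
  by rewrite expn0 !ltnS !leqn0 => /eqP-> /eqP->.
rewrite expnS => Hx Hy H.
have h2 : x./2 = y./2.
  apply: IH.
  - by rewrite -divn2 ltn_divLR // mulnC.
  - by rewrite -divn2 ltn_divLR // mulnC.
  by move=> k Hk; rewrite -!qbitS; apply: H.
have h1 : odd x = odd y by rewrite -!qbit0; apply: H.
by rewrite -[x]odd_double_half -[y]odd_double_half h1 h2.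
Qed.

Section Bits.
Variable n : nat.
Definition st := {ffun 'I_n -> bool}.
Definition bits (x : 'I_(2 ^ n)) : st := [ffun k : 'I_n => qbit x k].

Lemma bits_inj : injective bits.
Proof.
move=> x y H; apply: val_inj; apply: (@qbit_inj_nat n); [exact: ltn_ord|exact: ltn_ord|] => k Hk.
by have := congr1 (fun f : st => f (Ordinal Hk)) H; rewrite !ffunE.
Qed.

Lemma bits_bij : bijective bits.
Proof. by apply: (inj_card_bij bits_inj); rewrite card_ffun !card_ord card_bool. Qed.


Implicit Types (t q k : 'I_n) (s v w : st).

Definition mxs (F : st -> st -> C) : 'M[C]_(2 ^ n) := \matrix_(x, y) F (bits x) (bits y).

Lemma sum_bits (F : st -> C) : \sum_(x < 2 ^ n) F (bits x) = \sum_(s : st) F s.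
Proof. by rewrite [RHS](reindex bits) //; apply: onW_bij; exact: bits_bij. Qed.

Lemma mxs_mul F G : mxs F *m mxs G = mxs (fun s v => \sum_w F s w * G w v).
Proof.
apply/matrixP => x y; rewrite !mxE.
rewrite -(sum_bits (fun w => F (bits x) w * G w (bits y))).
by apply: eq_bigr => z _; rewrite !mxE.
Qed.

Lemma mxs_ext F G : (forall s v, F s v = G s v) -> mxs F = mxs G.
Proof. by move=> H; apply/matrixP => x y; rewrite !mxE H. Qed.

Definition tog (t : 'I_n) (b : bool) (v : st) : st := [ffun k => v k (+) (b && (k == t))].
Definition setb (t : 'I_n) (b : bool) (v : st) : st := [ffun k => if k == t then b else v k].
Definition agree (t : 'I_n) (s v : st) : bool := [forall k, (k != t) ==> (s k == v k)].
Definition ent (M : 'M[C]_2) (a b : bool) := M (b2o a) (b2o b).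
Definition Pm (f : st -> st) := mxs (fun s v => (s == f v)%:R).
Definition Dg (phi : st -> C) := mxs (fun s v => (s == v)%:R * phi v).
Definition uctrl (t : 'I_n) (F : st -> 'M[C]_2) :=
  mxs (fun s v => if agree t s v then ent (F (setb t false v)) (s t) (v t) else 0).

Lemma togE t b v k : tog t b v k = v k (+) (b && (k == t)).
Proof. by rewrite ffunE. Qed.
Lemma setbE t b v k : setb t b v k = if k == t then b else v k.
Proof. by rewrite ffunE. Qed.

Lemma agreeP t s v : reflect (forall k, k != t -> s k = v k) (agree t s v).
Proof.
apply: (iffP forallP) => H k; first by move=> Hk; have := H k; rewrite Hk => /eqP.
by apply/implyP => Hk; rewrite H.
Qed.

Lemma agree_sym t s v : agree t s v = agree t v s.
Proof. by apply/agreeP/agreeP => H k Hk; rewrite H. Qed.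

Lemma agree_trans t s w v : agree t s w -> agree t w v -> agree t s v.
Proof. by move=> /agreeP H1 /agreeP H2; apply/agreeP => k Hk; rewrite H1 // H2. Qed.

Lemma agree_setb t b v : agree t (setb t b v) v.
Proof. by apply/agreeP => k Hk; rewrite setbE (negPf Hk). Qed.

Lemma agree_setb_eq t w v : agree t w v -> w = setb t (w t) v.
Proof.
move=> /agreeP H; apply/ffunP => k; rewrite setbE.
by case: eqP => [->|/eqP Hk] //; rewrite H.
Qed.

Lemma setb_setb t b c v : setb t b (setb t c v) = setb t b v.
Proof. by apply/ffunP => k; rewrite !ffunE; case: eqP. Qed.

Lemma setb_id t v : setb t (v t) v = v.
Proof. by apply/ffunP => k; rewrite !setbE; case: eqP => // ->. Qed.

Lemma setb_at t b v : setb t b v t = b.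
Proof. by rewrite setbE eqxx. Qed.

Lemma sum_agree t v (h : st -> C) :
  \sum_w (if agree t w v then h w else 0) = h (setb t false v) + h (setb t true v).
Proof.
have Hne : setb t true v != setb t false v.
  by apply/eqP => /(congr1 (fun f : st => f t)); rewrite !setb_at.
rewrite (bigD1 (setb t false v)) ?agree_setb //= (bigD1 (setb t true v)) /=; last first.
  by rewrite Hne.
rewrite agree_setb big1 ?addr0 // => w /andP[H1 H2]; case: ifP => // Hw.
rewrite (agree_setb_eq Hw) in H1 H2.
by case: (w t) H1 H2; rewrite eqxx.
Qed.

Lemma b2oK (i : 'I_2) : b2o (i != ord0) = i.
Proof.
apply: val_inj; case: i => [[|[|i]] Hi] //=; rewrite /b2o /= inordK //.
Qed.

Lemma b2o_inj : injective b2o.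
Proof. by move=> a b /(congr1 val); rewrite /b2o /= !inordK //; case: a; case: b. Qed.

Lemma b2o_neq0 b : (b2o b != ord0) = b.
Proof.
case: b; rewrite /b2o; first by apply/eqP => /(congr1 val); rewrite /= inordK.
by apply/negbF/eqP; apply: val_inj; rewrite /= inordK.
Qed.

Lemma ent_mul (M N : 'M[C]_2) a b :
  ent (M *m N) a b = ent M a false * ent N false b + ent M a true * ent N true b.
Proof.
rewrite /ent mxE (bigD1 (b2o false)) //= (bigD1 (b2o true)) /=; last first.
  by apply/eqP => /b2o_inj.
rewrite big1 ?addr0 // => i /andP[H1 H2].
by move: H1 H2; rewrite -(b2oK i); case: (i != ord0); rewrite eqxx.
Qed.

Lemma mx2_ext (M N : 'M[C]_2) : (forall a b, ent M a b = ent N a b) -> M = N.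
Proof. by move=> H; apply/matrixP => i j; rewrite -(b2oK i) -(b2oK j); apply: H. Qed.

Lemma Pm_mul f g : Pm f *m Pm g = Pm (fun v => f (g v)).
Proof.
rewrite mxs_mul; apply: mxs_ext => s v.
rewrite (bigD1 (g v)) //= eqxx mulr1 big1 ?addr0 // => w /negPf ->.
by rewrite mulr0.
Qed.

Lemma Dg_mxs phi G : Dg phi *m mxs G = mxs (fun s v => phi s * G s v).
Proof.
rewrite mxs_mul; apply: mxs_ext => s v.
rewrite (bigD1 s) //= eqxx mul1r big1 ?addr0 // => w /negPf.
by rewrite eq_sym => ->; rewrite !mul0r.
Qed.

Lemma Dg_mul phi psi : Dg phi *m Dg psi = Dg (fun v => phi v * psi v).
Proof.
rewrite Dg_mxs; apply: mxs_ext => s v.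
by case: eqP => [->|]; rewrite ?mul1r ?mul0r ?mulr0.
Qed.

Lemma uctrl_mul t F G : uctrl t F *m uctrl t G = uctrl t (fun v => F v *m G v).
Proof.
rewrite mxs_mul; apply: mxs_ext => s v.
rewrite (eq_bigr (fun w => if agree t w v then
   (if agree t s w then ent (F (setb t false w)) (s t) (w t) *
      ent (G (setb t false v)) (w t) (v t) else 0) else 0)); last first.
  by move=> w _; case: (agree t w v); case: (agree t s w); rewrite ?mulr0 ?mul0r.
rewrite sum_agree !(agree_sym t s) !setb_setb !setb_at.
have E : forall b, agree t (setb t b v) s = agree t v s.
  move=> b; apply/idP/idP => H; last exact: agree_trans (agree_setb _ _ _) H.
  by apply: agree_trans H; rewrite agree_sym agree_setb.
rewrite !E; case: (agree t v s) => //; last by rewrite addr0.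
by rewrite ent_mul.
Qed.

Definition mk2 (f : bool -> bool -> C) : 'M[C]_2 := \matrix_(i, j) f (i != ord0) (j != ord0).
Lemma ent_mk2 f a b : ent (mk2 f) a b = f a b.
Proof. by rewrite /ent mxE !b2o_neq0. Qed.
Lemma ent1 a b : ent 1%:M a b = (a == b)%:R.
Proof. by rewrite /ent mxE (inj_eq b2o_inj). Qed.

Definition Xm := mk2 (fun a b => (a != b)%:R).
Definition dg (f : bool -> C) := mk2 (fun a b => (a == b)%:R * f a).

Lemma cnot_mx c t (H : c != t) :
  gate_mx (CNOT H) = Pm (fun v => tog t (v c) v).
Proof.
apply/matrixP => x y; rewrite !mxE; congr (_ %:R); congr (nat_of_bool _).
apply/idP/idP => [/forallP H1|/eqP Hx]; last first.
  apply/forallP => k; have := congr1 (fun f : st => f k) Hx; rewrite !ffunE => ->.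
  by case: (k == t); case: (qbit y c); case: (qbit y k).
apply/eqP/ffunP => k; have := H1 k; rewrite !ffunE => /eqP ->.
by case: (k == t); case: (qbit y c); case: (qbit y k).
Qed.

Lemma single_mx q (u : 'M[C]_2) (Hu : u \is unitarymx) :
  gate_mx (Single q Hu) = uctrl q (fun _ => u).
Proof.
apply/matrixP => x y; rewrite !mxE /ent !ffunE.
congr (if _ then _ else _); apply: eq_forallb => k; by rewrite !ffunE.
Qed.

Lemma Pm_tog t (p : st -> bool) : (forall v b, p (setb t b v) = p v) ->
  Pm (fun v => tog t (p v) v) = uctrl t (fun v => if p v then Xm else 1%:M).
Proof.
move=> Hp; apply: mxs_ext => s v; rewrite Hp.
have [Hag|Hag] := boolP (agree t s v).
  have -> : (s == tog t (p v) v) = (s t == v t (+) p v).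
    apply/eqP/eqP => [->|H]; first by rewrite togE eqxx andbT.
    apply/ffunP => k; rewrite togE; case: (eqVneq k t) => [->|Hk].
      by rewrite H andbT.
    by rewrite andbF addbF; apply/(agreeP _ _ _ Hag).
  case: (p v); rewrite ?ent_mk2 ?ent1; by case: (s t); case: (v t).
case: eqP => // Hs; exfalso; move/negP: Hag; apply; apply/agreeP => k Hk.
by rewrite Hs togE (negPf Hk) andbF addbF.
Qed.

Lemma Dg_uctrl t phi : Dg phi = uctrl t (fun v => dg (fun b => phi (setb t b v))).
Proof.
apply: mxs_ext => s v; rewrite ent_mk2 setb_setb.
have [Hag|Hag] := boolP (agree t s v).
  have -> : (s == v) = (s t == v t).
    apply/eqP/eqP => [->|H] //; apply/ffunP => k.
    by case: (eqVneq k t) => [->|Hk] //; apply/(agreeP _ _ _ Hag).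
  by case: eqP => [->|]; rewrite ?setb_id ?eqxx ?mul1r ?mul0r.
case: eqP => [Hs|]; last by rewrite mul0r.
by move: Hag; rewrite Hs; move/negP; case; apply/agreeP.
Qed.

End Bits.

Ltac simp2 := rewrite /= ?mulr1n ?mulr0n ?mul1r ?mul0r ?mulr1 ?mulr0 ?addr0 ?add0r
   ?rmorph0 ?rmorph1 ?mul1r ?mul0r ?mulr1 ?mulr0 ?addr0 ?add0r.
Lemma dg_mul f g : dg f *m dg g = dg (fun b => f b * g b).
Proof.
apply: mx2_ext => a b; rewrite ent_mul !ent_mk2.
by case: a; case: b; simp2.
Qed.

Lemma dg_ext f g : (forall b, f b = g b) -> dg f = dg g.
Proof. by move=> H; apply: mx2_ext => a b; rewrite !ent_mk2 H. Qed.

Lemma dg1 : dg (fun _ => 1) = 1%:M.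
Proof. by apply: mx2_ext => a b; rewrite ent_mk2 ent1 mulr1. Qed.

Lemma dgc c : dg (fun _ => c) = c *: 1%:M.
Proof.
by apply: mx2_ext => a b; rewrite ent_mk2 /ent mxE -/(ent _ _ _) ent1 mulrC.
Qed.

Lemma XX : Xm *m Xm = 1%:M.
Proof.
apply: mx2_ext => a b; rewrite ent_mul !ent_mk2 ent1.
by case: a; case: b; simp2.
Qed.

Lemma X_dg_X f : Xm *m dg f *m Xm = dg (fun b => f (~~ b)).
Proof.
apply: mx2_ext => a b; rewrite !ent_mul !ent_mk2.
by case: a; case: b; simp2.
Qed.

Lemma ent_tc (M : 'M[C]_2) a b : ent (M ^t*) a b = (ent M b a)^*.
Proof. by rewrite /ent !mxE. Qed.

Lemma unitary2 (M : 'M[C]_2) :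
  (forall a b, ent M a false * (ent M b false)^* + ent M a true * (ent M b true)^*
     = (a == b)%:R) -> M \is unitarymx.
Proof.
by move=> H; apply/unitarymxP; apply: mx2_ext => a b; rewrite ent_mul !ent_tc ent1 H.
Qed.

Definition unitc (z : C) := z * z^* = 1.

Lemma unitc_conj z : unitc z -> unitc z^*.
Proof. by rewrite /unitc conjCK mulrC. Qed.

Lemma unitc_mul z w : unitc z -> unitc w -> unitc (z * w).
Proof.
rewrite /unitc rmorphM => H1 H2.
by rewrite mulrACA H1 H2 mulr1.
Qed.

Lemma unitc_sqrt z : unitc z -> unitc (sqrtC z).
Proof.
rewrite /unitc => H.
have H2 : (sqrtC z * (sqrtC z)^*) ^+ 2 = 1.
  by rewrite exprMn -rmorphXn sqrtCK.
have := mul_conjC_ge0 (sqrtC z).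
move/eqP: H2; rewrite sqrf_eq1 => /orP[/eqP -> //|/eqP ->].
by rewrite oppr_ge0 ler10.
Qed.

Lemma unitc_inv z : unitc z -> z^-1 = z^*.
Proof.
move=> H; have Hz : z != 0.
  by apply/eqP => Hz; move: H; rewrite /unitc Hz mul0r => /eqP; rewrite eq_sym oner_eq0.
by rewrite -[z^-1]mulr1 -H mulrA mulVf // mul1r.
Qed.

Lemma dg_unitary f : (forall b, unitc (f b)) -> dg f \is unitarymx.
Proof.
move=> H; apply: unitary2 => a b; rewrite !ent_mk2.
by case: a; case: b; rewrite /= ?mul1r ?mul0r ?addr0 ?add0r ?rmorph0 ?mulr0 ?mul1r
   ?rmorph1 ?mulr1 ?H //.
Qed.

Lemma X_unitary : Xm \is unitarymx.
Proof.
apply: unitary2 => a b; rewrite !ent_mk2.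
by case: a; case: b; rewrite /= ?rmorph0 ?rmorph1 ?mulr0 ?mul0r ?mulr1 ?addr0 ?add0r.
Qed.

Lemma scale1_unitary c : unitc c -> c *: (1%:M : 'M[C]_2) \is unitarymx.
Proof. by move=> H; rewrite -dgc; apply: dg_unitary. Qed.

Section Circ.
Variable n : nat.
Implicit Types (t q : 'I_n).

Lemma circuit_mx_cat (c1 c2 : circuit n) :
  circuit_mx (c1 ++ c2) = circuit_mx c2 *m circuit_mx c1.
Proof.
elim: c1 => [|g c1 IH] /=; first by rewrite mulmx1.
by rewrite IH mulmxA.
Qed.

Lemma cnot_count_cat (c1 c2 : circuit n) :
  cnot_count (c1 ++ c2) = (cnot_count c1 + cnot_count c2)%N.
Proof. by rewrite /cnot_count count_cat. Qed.

Definition cx_def (c t : 'I_n) : circuit n :=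
  if (c != t) =P true is ReflectT H then [:: CNOT H] else [::].

Definition sg_def (q : 'I_n) (u : 'M[C]_2) : circuit n :=
  if (u \is unitarymx) =P true is ReflectT H then [:: Single q H] else [::].
Fact cx_key : unit. Proof. exact: tt. Qed.
Definition cx := locked_with cx_key cx_def.
Fact sg_key : unit. Proof. exact: tt. Qed.
Definition sg := locked_with sg_key sg_def.

Lemma cx_mx c t : c != t -> circuit_mx (cx c t) = Pm (fun v => tog t (v c) v).
Proof. rewrite /cx unlock /cx_def; case: eqP => // H _; exact: (etrans (mul1mx _) (cnot_mx H)). Qed.

Lemma sg_mx q u : u \is unitarymx -> circuit_mx (sg q u) = uctrl q (fun _ => u).
Proof. rewrite /sg unlock /sg_def; case: eqP => // H _; exact: (etrans (mul1mx _) (single_mx _ H)). Qed.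

Lemma cx_cnt c t : (cnot_count (cx c t) <= 1)%N.
Proof. by rewrite /cx unlock /cx_def; case: eqP. Qed.

Lemma sg_cnt q u : cnot_count (sg q u) = 0%N.
Proof. by rewrite /sg unlock /sg_def; case: eqP. Qed.

Lemma uctrl_ext t F G : (forall v, F (setb t false v) = G (setb t false v)) ->
  uctrl t F = uctrl t G.
Proof. by move=> H; apply: mxs_ext => s v; rewrite H. Qed.

Lemma uctrl_dg t (f : st n -> bool -> C) :
  uctrl t (fun v => dg (f v)) = Dg (fun v => f (setb t false v) (v t)).
Proof.
rewrite (Dg_uctrl t); apply: uctrl_ext => v.
apply: dg_ext => b /=; by rewrite !setb_setb setb_at.
Qed.

Lemma Pm_uctrl_true t : Pm (fun v => tog t true v) = uctrl t (fun _ => Xm).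
Proof. by rewrite (Pm_tog (p := fun _ => true)). Qed.

Definition Bd (nu : C) := dg (fun b => if b then nu else 1).

Definition word_def t (c1 c2 : circuit n) (nu : C) : circuit n :=
  sg t (Bd nu^*) ++ c2 ++ sg t (Bd nu) ++ c1 ++
  sg t (Bd nu^*) ++ c2 ++ sg t (Bd nu) ++ c1.
Fact word_key : unit. Proof. exact: tt. Qed.
Definition word := locked_with word_key word_def.

Lemma word_cnt t c1 c2 nu :
  cnot_count (word t c1 c2 nu) = (2 * cnot_count c1 + 2 * cnot_count c2)%N.
Proof. rewrite /word unlock /word_def !cnot_count_cat !sg_cnt; lia. Qed.

Lemma BB nu : unitc nu -> Bd nu *m Bd nu^* = 1%:M.
Proof.
move=> H; rewrite dg_mul -dg1; apply: dg_ext => b.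
by case: b; rewrite ?H ?mulr1.
Qed.

Lemma BB' nu : unitc nu -> Bd nu^* *m Bd nu = 1%:M.
Proof. by move=> H; rewrite -{2}[nu]conjCK BB //; apply: unitc_conj. Qed.

Lemma word_mx t c1 c2 nu (p1 p2 : st n -> bool) :
  unitc nu ->
  (forall v b, p1 (setb t b v) = p1 v) -> (forall v b, p2 (setb t b v) = p2 v) ->
  circuit_mx c1 = Pm (fun v => tog t (p1 v) v) ->
  circuit_mx c2 = Pm (fun v => tog t (p2 v) v) ->
  circuit_mx (word t c1 c2 nu) =
  uctrl t (fun v => if p1 v && p2 v then dg (fun b => if b then nu^* ^+ 2 else nu ^+ 2)
                    else 1%:M).
Proof.
move=> Hnu H1 H2 E1 E2.
have U1 : Bd nu \is unitarymx by apply: dg_unitary => -[] //; rewrite /unitc rmorph1 mulr1.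
have U2 : Bd nu^* \is unitarymx.
  by apply: dg_unitary => -[]; [apply: unitc_conj | rewrite /unitc rmorph1 mulr1].
rewrite /word unlock /word_def !circuit_mx_cat E1 E2 !sg_mx // !Pm_tog // ?mulmxA !uctrl_mul.
apply: uctrl_ext => v; case: (p1 _); case: (p2 _); rewrite /= ?mulmx1 ?mul1mx.
- have E : Xm *m Bd nu *m Xm *m Bd nu^* = dg (fun b => if b then nu^* else nu).
    rewrite X_dg_X dg_mul; apply: dg_ext => -[]; by rewrite ?mulr1 ?mul1r.
  have -> : Xm *m Bd nu *m Xm *m Bd nu^* *m Xm *m Bd nu *m Xm *m Bd nu^* =
     (Xm *m Bd nu *m Xm *m Bd nu^*) *m (Xm *m Bd nu *m Xm *m Bd nu^*) by rewrite !mulmxA.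
  rewrite E dg_mul; apply: dg_ext => -[]; by rewrite expr2.
- have -> : Xm *m Bd nu *m Bd nu^* *m Xm *m Bd nu *m Bd nu^* =
     Xm *m (Bd nu *m Bd nu^*) *m Xm *m (Bd nu *m Bd nu^*) by rewrite !mulmxA.
  by rewrite BB // !mulmx1 XX.
- have -> : Bd nu *m Xm *m Bd nu^* *m Bd nu *m Xm *m Bd nu^* =
     Bd nu *m Xm *m (Bd nu^* *m Bd nu) *m Xm *m Bd nu^* by rewrite !mulmxA.
  by rewrite BB' // mulmx1 -(mulmxA (Bd nu)) XX mulmx1 BB.
- have -> : Bd nu *m Bd nu^* *m Bd nu *m Bd nu^* =
     (Bd nu *m Bd nu^*) *m (Bd nu *m Bd nu^*) by rewrite !mulmxA.
  by rewrite BB // mulmx1.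
Qed.
End Circ.

Definition hh : C := (sqrtC 2)^-1.

Lemma hh_real : hh^* = hh.
Proof.
apply: conj_Creal; rewrite /hh realV; apply: sqrtC_real.
by rewrite ler0n.
Qed.

Lemma hh2 : hh * hh = 2^-1.
Proof. by rewrite /hh -invfM -expr2 sqrtCK. Qed.

Lemma hh2' : hh * hh *+ 2 = 1.
Proof. by rewrite hh2 -mulr_natr mulVf // pnatr_eq0. Qed.

Definition Hm := mk2 (fun a b => if a && b then - hh else hh).

Lemma HH : Hm *m Hm = 1%:M.
Proof.
apply: mx2_ext => a b; rewrite ent_mul !ent_mk2 ent1.
case: a; case: b; rewrite /= ?mulr1n ?mulr0n.
all: first [ring | rewrite -hh2'; ring].
Qed.

Lemma H_unitary : Hm \is unitarymx.
Proof.
apply/unitarymxP.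
suff -> : Hm ^t* = Hm by exact: HH.
apply: mx2_ext => a b; rewrite ent_tc !ent_mk2.
have Hr : hh \is Num.real by rewrite /hh realV sqrtC_real // ler0n.
by case: a; case: b; rewrite /=; apply: conj_Creal; rewrite ?rpredN.
Qed.

Lemma H_dg_H k : Hm *m dg (fun b => if b then - k else k) *m Hm = k *: Xm.
Proof.
apply: mx2_ext => a b; rewrite !ent_mul !ent_mk2 /ent mxE -/(ent _ _ _) ent_mk2.
have E := hh2'.
case: a; case: b; rewrite /= ?mulr1n ?mulr0n ?mul1r ?mul0r ?mulr0 ?addr0 ?add0r.
all: first [ring | (apply: (@eq_trans _ _ (k * (hh * hh *+ 2))); [ring | by rewrite hh2' mulr1])].
Qed.

Lemma unitc_i : unitc 'i.
Proof. by rewrite /unitc conjCi mulrN -expr2 sqrCi opprK. Qed.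

Lemma unitc_Ni : unitc (- 'i).
Proof. rewrite -conjCi; exact: unitc_conj unitc_i. Qed.

Definition om : C := sqrtC 'i.
Definition nu1 : C := sqrtC (- 'i).
Definition nu2 : C := sqrtC (om^*).

Lemma unitc_om : unitc om. Proof. exact: unitc_sqrt unitc_i. Qed.
Lemma unitc_nu1 : unitc nu1. Proof. exact: unitc_sqrt unitc_Ni. Qed.
Lemma unitc_nu2 : unitc nu2. Proof. exact/unitc_sqrt/unitc_conj/unitc_om. Qed.

Lemma Bd_unitary nu : unitc nu -> Bd nu \is unitarymx.
Proof. by move=> H; apply: dg_unitary => -[] //; rewrite /unitc rmorph1 mulr1. Qed.

Lemma if_dg (c : bool) f : (if c then dg f else 1%:M) = dg (fun x => if c then f x else 1).
Proof. by case: c; rewrite ?dg1. Qed.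

Lemma scale1mx (c : C) (M : 'M[C]_2) : (c *: 1%:M) *m M = c *: M.
Proof. by rewrite -scalemxAl mul1mx. Qed.

Lemma conjX2 (z : C) : z^* ^+ 2 = (z ^+ 2)^*.
Proof. by rewrite rmorphXn. Qed.

Lemma conjNi : (- 'i)^* = 'i :> C.
Proof. by rewrite -conjCi conjCK. Qed.

Lemma nu1_2 : nu1 ^+ 2 = - 'i. Proof. exact: sqrtCK. Qed.
Lemma nu1c_2 : nu1^* ^+ 2 = - nu1 ^+ 2.
Proof. by rewrite conjX2 nu1_2 conjNi opprK. Qed.
Lemma nu2c_2 : nu2^* ^+ 2 = om.
Proof. by rewrite conjX2 sqrtCK conjCK. Qed.
Lemma nu2_2 : nu2 ^+ 2 = om^*.
Proof. exact: sqrtCK. Qed.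
Lemma om_2 : om * om = 'i.
Proof. by rewrite -expr2 sqrtCK. Qed.

Section Tof.
Variable n : nat.
Implicit Types (t q a b : 'I_n).

Definition tof a b t : circuit n :=
  sg t Hm ++ word t (cx a t) (cx b t) nu1 ++ sg t Hm ++ sg a (Bd om) ++
  word b (cx a b) (sg b Xm) nu2.

Lemma tof_cnt a b t : (cnot_count (tof a b t) <= 6)%N.
Proof.
rewrite /tof !cnot_count_cat !word_cnt !sg_cnt.
have := cx_cnt a t; have := cx_cnt b t; have := cx_cnt a b; lia.
Qed.

Lemma tof_mx a b t : a != b -> a != t -> b != t ->
  circuit_mx (tof a b t) = Pm (fun v => tog t (v a && v b) v).
Proof.
move=> Hab Hat Hbt.
have Hba : b != a by rewrite eq_sym.
have Hta : t != a by rewrite eq_sym.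
have Htb : t != b by rewrite eq_sym.
rewrite /tof !circuit_mx_cat.
rewrite (@word_mx _ b (cx a b) (sg b Xm) nu2 (fun v => v a) (fun _ => true)); first last.
- by rewrite sg_mx ?X_unitary // Pm_uctrl_true.
- by rewrite cx_mx.
- by [].
- by move=> v c; rewrite setbE (negbTE Hab).
- exact: unitc_nu2.
rewrite (@word_mx _ t (cx a t) (cx b t) nu1 (fun v => v a) (fun v => v b)); first last.
- by rewrite cx_mx.
- by rewrite cx_mx.
- by move=> v c; rewrite setbE (negbTE Hbt).
- by move=> v c; rewrite setbE (negbTE Hat).
- exact: unitc_nu1.
rewrite !sg_mx ?H_unitary ?Bd_unitary ?unitc_om //.
rewrite (uctrl_ext (G := fun v => dg (fun x => if v a then
    (if x then nu2^* ^+ 2 else nu2 ^+ 2) else 1))); last first.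
  by move=> v; rewrite andbT if_dg.
rewrite uctrl_dg /Bd uctrl_dg Dg_mul (Dg_uctrl t) !uctrl_mul.
rewrite (Pm_tog (t := t)); last by move=> v c; rewrite !setbE (negbTE Hat) (negbTE Hbt).
apply: uctrl_ext => v.
have E1 : forall x w, setb t x w a = w a by move=> x w; rewrite setbE (negbTE Hat).
have E2 : forall x w, setb t x w b = w b by move=> x w; rewrite setbE (negbTE Hbt).
have E3 : forall x w, setb b x w a = w a by move=> x w; rewrite setbE (negbTE Hab).
rewrite (@dg_ext _ (fun _ => (if v a then (if v b then nu2^* ^+ 2 else nu2 ^+ 2) else 1) *
   (if v a then om else 1))); last by move=> x; rewrite E3 !E1 !E2.
rewrite !E1 !E2 dgc.
case: (v a); case: (v b); rewrite /=.
- rewrite (@dg_ext _ (fun x => if x then - nu1 ^+ 2 else nu1 ^+ 2)); last first.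
    by case; rewrite ?nu1c_2.
  rewrite scale1mx -!scalemxAl H_dg_H scalerA nu2c_2 om_2 nu1_2 mulrN -expr2 sqrCi.
  by rewrite opprK scale1r.
- rewrite nu2_2 mulrC (unitc_om) scale1r mul1mx mulmx1; exact: HH.
- by rewrite mul1r scale1r mul1mx mulmx1 HH.
- by rewrite mul1r scale1r mul1mx mulmx1 HH.
- exact: unitc_om.
Qed.
End Tof.

Section MCX.
Variable n : nat.
Implicit Types (t q a x : 'I_n) (v w : st n) (xs an : seq 'I_n).

Definition AND xs v : bool := all (fun x => v x) xs.

Lemma tog_at t b v : tog t b v t = v t (+) b.
Proof. by rewrite togE eqxx andbT. Qed.

Lemma tog_ne t q b v : q != t -> tog t b v q = v q.
Proof. by move=> H; rewrite togE (negbTE H) andbF addbF. Qed.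

Lemma tog_tog t b c v : tog t b (tog t c v) = tog t (b (+) c) v.
Proof.
apply/ffunP => k; rewrite !togE.
by case: (k == t); rewrite ?andbT ?andbF ?addbF //; case: (v k); case: b; case: c.
Qed.

Lemma togK t b v : tog t b (tog t b v) = v.
Proof.
by rewrite tog_tog addbb; apply/ffunP => k; rewrite togE andFb addbF.
Qed.

Lemma tog_comm t q b c v : tog t b (tog q c v) = tog q c (tog t b v).
Proof. by apply/ffunP => k; rewrite !togE addbAC. Qed.

Lemma AND_tog xs q b v : q \notin xs -> AND xs (tog q b v) = AND xs v.
Proof.
move=> H; apply: eq_in_all => x Hx; rewrite tog_ne //.
by apply: contraNneq H => <-.
Qed.

Lemma AND_fix xs (f : st n -> st n) v : (forall x, x \in xs -> f v x = v x) ->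
  AND xs (f v) = AND xs v.
Proof. by move=> H; apply: eq_in_all => x Hx; rewrite H. Qed.

Lemma Pm_ext (f g : st n -> st n) : (forall v, f v = g v) -> Pm f = Pm g.
Proof. by move=> H; apply: mxs_ext => s v; rewrite H. Qed.

Definition good (f : st n -> st n) xs an t :=
  [/\ forall v, f (f v) = v,
      forall v, f v t = v t (+) AND xs v,
      forall q, q \notin t :: xs ++ an ->
         (forall b v, f (tog q b v) = tog q b (f v)) /\ (forall v, f v q = v q) &
      forall x, x \in xs -> forall v, f v x = v x].

Fact tof_key : unit. Proof. exact: tt. Qed.
Definition tof' := locked_with tof_key (@tof n).
Lemma tof'_mx a b t : a != b -> a != t -> b != t ->
  circuit_mx (tof' a b t) = Pm (fun v => tog t (v a && v b) v).
Proof. by rewrite /tof' unlock; apply: tof_mx. Qed.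
Lemma tof'_cnt a b t : (cnot_count (tof' a b t) <= 6)%N.
Proof. by rewrite /tof' unlock; apply: tof_cnt. Qed.

Fixpoint vch_rec xs an t : circuit n :=
  match xs with
  | [:: _] => [::]
  | [:: x2; x1] => tof' x1 x2 t
  | x :: xs' => if an is a :: an' then tof' x a t ++ vch_rec xs' an' a ++ tof' x a t
                else [::]
  | [::] => [::]
  end.

Lemma vch_good xs : forall an t, (2 <= size xs)%N -> (size xs <= size an + 2)%N ->
  uniq (t :: xs ++ an) ->
  exists f, circuit_mx (vch_rec xs an t) = Pm f /\ good f xs an t.
Proof.
elim: xs => [|x xs' IH] an t //= Hs1 Hs2 Hu.
case: xs' IH Hs1 Hs2 Hu => [|x1 xs''] IH Hs1 Hs2 Hu //.
case: xs'' IH Hs1 Hs2 Hu => [|x2 xs3] IH Hs1 Hs2 Hu.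
  move: Hu; rewrite /= !inE !negb_or => /and4P[/and3P[Htx Htx1 _] /andP[Hxx1 _] _ _].
  exists (fun v => tog t (v x1 && v x) v); split.
    rewrite tof'_mx //; [by rewrite eq_sym | by rewrite eq_sym | by rewrite eq_sym].
  split.
  - move=> v; rewrite !tog_ne ?togK //; by rewrite eq_sym.
  - by move=> v; rewrite tog_at /AND /= andbT andbC.
  - move=> q; rewrite !inE !negb_or => /andP[Hqt /andP[Hqx /andP[Hqx1 _]]]; split.
      move=> b v; rewrite (tog_ne _ _ (_ : x1 != q)) 1?eq_sym //.
      by rewrite (tog_ne _ _ (_ : x != q)) 1?eq_sym // tog_comm.
    by move=> v; rewrite tog_ne.
  - move=> y; rewrite !inE => /orP[/eqP->|/eqP->] v; rewrite tog_ne //;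
    by rewrite eq_sym.
case: an Hs2 Hu => [|a an'] Hs2 Hu; first by [].
set xs' := [:: x1, x2 & xs3] in IH Hs2 Hu *.
have Evch : vch_rec (x :: xs') (a :: an') t = tof' x a t ++ vch_rec xs' an' a ++ tof' x a t.
  by [].
have Hsz : (1 < size xs')%N by [].
clearbody xs'.
have Hu1 : uniq (xs' ++ a :: an') by move: Hu => /= /andP[_ /andP[_ ->]].
have Hu' : uniq (a :: xs' ++ an').
  by rewrite -(perm_uniq (permEl (perm_catCA xs' [:: a] an'))).
have [f' [Ef' [G1 G2 G3 G4]]] := IH an' a Hsz Hs2 Hu'.
move: Hu => /= /andP[Ht /andP[Hx _]].
move: Ht; rewrite !(inE, mem_cat) !negb_or => /and3P[Htx Htxs' /andP[Hta Htan]].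
move: Hx; rewrite !(inE, mem_cat) !negb_or => /andP[Hxxs' /andP[Hxa Hxan]].
have Hxt : x != t by rewrite eq_sym.
have Hat : a != t by rewrite eq_sym.
set T := fun v => tog t (v x && v a) v.
have TT : forall v, T (T v) = v.
  by move=> v; rewrite /T !tog_ne // togK.
have Hf't : t \notin a :: xs' ++ an' by rewrite !inE mem_cat !negb_or Hta Htxs' Htan.
have Hf'x : x \notin a :: xs' ++ an' by rewrite !inE mem_cat !negb_or Hxa Hxxs' Hxan.
have [Ct Ft] := G3 t Hf't.
have [Cx Fx] := G3 x Hf'x.
exists (fun v => T (f' (T v))); split.
  by rewrite !circuit_mx_cat Ef' tof'_mx // !Pm_mul.
split.
- by move=> v; rewrite TT G1 TT.
- move=> v; rewrite /T tog_at !Ct tog_at Ft (tog_ne _ _ Hxt) (tog_ne _ _ Hat) Fx G2.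
  rewrite /AND /= -/(AND xs' v).
  by case: (v t); case: (v x); case: (v a); case: (AND xs' v).
- move=> q Hq.
  have Hqt : q != t by apply: contraNneq Hq => ->; rewrite inE eqxx.
  have Hqx : q != x by apply: contraNneq Hq => ->; rewrite !(inE, mem_cat) eqxx !orbT.
  have Hqa : q != a by apply: contraNneq Hq => ->; rewrite !(inE, mem_cat) eqxx !orbT.
  have Hqxs' : q \notin xs' by apply: contra Hq => H; rewrite !(inE, mem_cat) H !orbT.
  have Hqan : q \notin an' by apply: contra Hq => H; rewrite !(inE, mem_cat) H !orbT.
  have Hq' : q \notin a :: xs' ++ an' by rewrite !inE mem_cat !negb_or Hqa Hqxs' Hqan.
  have [Cq Fq] := G3 q Hq'.
  have Hxq : x != q by rewrite eq_sym.
  have Haq : a != q by rewrite eq_sym.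
  have CT : forall b v, T (tog q b v) = tog q b (T v).
    by move=> b v; rewrite /T (tog_ne _ _ Hxq) (tog_ne _ _ Haq) tog_comm.
  split; first by move=> b v; rewrite CT Cq CT.
  by move=> v; rewrite /T tog_ne // Fq tog_ne.
- move=> y; rewrite inE => /orP[/eqP->|Hy] v.
    by rewrite /T tog_ne // Fx tog_ne.
  have Hyt : y != t by apply: contraNneq Htxs' => <-.
  by rewrite /T tog_ne // G4 // tog_ne.
Qed.

Lemma vch_cnt xs an t : (cnot_count (vch_rec xs an t) <= 12 * size xs)%N.
Proof.
elim: xs an t => [|x xs' IH] an t; first by [].
case: xs' IH => [|x1 xs''] IH; first by [].
case: xs'' IH => [|x2 xs3] IH.
  by apply: leq_trans (tof'_cnt _ _ _) _.
case: an => [|a an']; first by [].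
change (cnot_count (tof' x a t ++ vch_rec [:: x1, x2 & xs3] an' a ++ tof' x a t)
  <= 12 * size [:: x, x1, x2 & xs3])%N.
rewrite !cnot_count_cat; have := IH an' a; have := tof'_cnt x a t.
rewrite /=; lia.
Qed.



Definition mcx_def xs an t : circuit n :=
  match xs with
  | [::] => sg t Xm
  | [:: x] => cx x t
  | [:: x2; x1] => tof' x1 x2 t
  | x :: xs' => if an is a :: an' then
       tof' x a t ++ vch_rec xs' an' a ++ tof' x a t ++ vch_rec xs' an' a else [::]
  end.
Fact mcx_key : unit. Proof. exact: tt. Qed.
Definition mcx := locked_with mcx_key mcx_def.

Lemma mcx_cnt xs an t : (cnot_count (mcx xs an t) <= 24 * size xs)%N.
Proof.
rewrite /mcx unlock; case: xs => [|x [|x1 [|x2 xs3]]].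
- by rewrite /= sg_cnt.
- by apply: leq_trans (cx_cnt _ _) _.
- by apply: leq_trans (tof'_cnt _ _ _) _.
case: an => [|a an']; first by [].
change (cnot_count (tof' x a t ++ vch_rec [:: x1, x2 & xs3] an' a ++ tof' x a t ++
   vch_rec [:: x1, x2 & xs3] an' a) <= 24 * size [:: x, x1, x2 & xs3])%N.
rewrite !cnot_count_cat; have := vch_cnt [:: x1, x2 & xs3] an' a; have := tof'_cnt x a t.
rewrite /=; lia.
Qed.

Lemma mcx_mx xs an t : uniq (t :: xs ++ an) -> (size xs <= size an + 2)%N ->
  circuit_mx (mcx xs an t) = Pm (fun v => tog t (AND xs v) v).
Proof.
rewrite /mcx unlock; case: xs => [|x [|x1 [|x2 xs3]]] Hu Hs.
- by rewrite /= sg_mx ?X_unitary // -Pm_uctrl_true.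
- move: Hu => /= /andP[Ht _]; have Hxt : x != t.
    by apply: contraNneq Ht => ->; rewrite inE eqxx.
  by rewrite /= cx_mx //; apply: Pm_ext => v; rewrite /AND /= andbT.
- move: Hu => /= /andP[Ht /andP[Hx _]].
  have Hxt : x != t by apply: contraNneq Ht => ->; rewrite !inE eqxx.
  have Hx1t : x1 != t by apply: contraNneq Ht => ->; rewrite !inE eqxx orbT.
  have Hx1x : x1 != x by apply: contraNneq Hx => ->; rewrite !inE eqxx.
  by rewrite /= tof'_mx //; apply: Pm_ext => v; rewrite /AND /= andbT andbC.
case: an Hu Hs => [|a an'] Hu Hs; first by [].
set xs' := [:: x1, x2 & xs3] in Hu Hs *.
have Hsz : (1 < size xs')%N by [].
change (circuit_mx (tof' x a t ++ vch_rec xs' an' a ++ tof' x a t ++ vch_rec xs' an' a) =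
  Pm (fun v => tog t (AND (x :: xs') v) v)).
clearbody xs'.
have Hu1 : uniq (xs' ++ a :: an') by move: Hu => /= /andP[_ /andP[_ ->]].
have Hu' : uniq (a :: xs' ++ an').
  by rewrite -(perm_uniq (permEl (perm_catCA xs' [:: a] an'))).
have [f' [Ef' [G1 G2 G3 G4]]] := vch_good Hsz Hs Hu'.
move: (Hu) => /= /andP[Ht /andP[Hx _]].
have Hxt : x != t by apply: contraNneq Ht => ->; rewrite inE eqxx.
have Hat : a != t by apply: contraNneq Ht => ->; rewrite !(inE, mem_cat) eqxx !orbT.
have Hxa : x != a by apply: contraNneq Hx => ->; rewrite !(inE, mem_cat) eqxx !orbT.
have Hf't : t \notin a :: xs' ++ an'.
  by apply: contra Ht; rewrite !(inE, mem_cat) => /orP[->|/orP[->|->]]; rewrite ?orbT ?orTb.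
have Hf'x : x \notin a :: xs' ++ an'.
  by apply: contra Hx; rewrite !(inE, mem_cat) => /orP[->|/orP[->|->]]; rewrite ?orbT ?orTb.
have [Ct Ft] := G3 t Hf't.
have [Cx Fx] := G3 x Hf'x.
rewrite !circuit_mx_cat Ef' tof'_mx // !Pm_mul; apply: Pm_ext => v.
rewrite (Ct (f' (tog t (v x && v a) v) x && f' (tog t (v x && v a) v) a)) G1 tog_tog.
rewrite (Ct (v x && v a) v) (tog_ne _ _ Hxt) (tog_ne _ _ Hat) Fx G2; congr tog.
by case: (v x); case: (v a); case: (AND xs' v).
Qed.
End MCX.

Section MCW.
Variable n : nat.
Implicit Types (t q : 'I_n) (v w : st n) (S : seq 'I_n).

Lemma AND_setb S t b v : t \notin S -> AND S (setb t b v) = AND S v.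
Proof.
move=> H; apply: eq_in_all => x Hx; rewrite setbE.
by case: eqP => // Ex; move: H; rewrite -Ex Hx.
Qed.

Definition hf S := uphalf (size S).

Definition mcw_def S t nu : circuit n :=
  word t (mcx (take (hf S) S) (drop (hf S) S) t) (mcx (drop (hf S) S) (take (hf S) S) t) nu.
Fact mcw_key : unit. Proof. exact: tt. Qed.
Definition mcw := locked_with mcw_key mcw_def.

Lemma hf_le S : (hf S <= size S)%N /\ (hf S <= size S - hf S + 2)%N /\
   (size S - hf S <= hf S + 2)%N.
Proof.
rewrite /hf uphalf_half; have := odd_double_half (size S).
move: (size S) (odd (size S)) ((size S)./2) => k o h; rewrite -addnn.
case: o => /=; lia.
Qed.

Lemma mcw_cnt S t nu : (cnot_count (mcw S t nu) <= 48 * size S)%N.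
Proof.
rewrite /mcw unlock /mcw_def word_cnt.
have := mcx_cnt (take (hf S) S) (drop (hf S) S) t.
have := mcx_cnt (drop (hf S) S) (take (hf S) S) t.
rewrite size_take size_drop; have [H1 _] := hf_le S.
case: ltnP => H2; lia.
Qed.

Lemma mcw_mx S t nu : uniq (t :: S) -> unitc nu ->
  circuit_mx (mcw S t nu) =
  uctrl t (fun v => if AND S v then dg (fun b => if b then nu^* ^+ 2 else nu ^+ 2)
                    else 1%:M).
Proof.
move=> Hu Hnu; rewrite /mcw unlock /mcw_def.
have [H1 [H2 H3]] := hf_le S.
have Ht : t \notin S by case/andP: Hu.
have Ht1 : t \notin take (hf S) S by apply: contra Ht; apply: mem_take.
have Ht2 : t \notin drop (hf S) S by apply: contra Ht; apply: mem_drop.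
have Hu1 : uniq (t :: take (hf S) S ++ drop (hf S) S) by rewrite cat_take_drop.
have Hu2 : uniq (t :: drop (hf S) S ++ take (hf S) S).
  by rewrite /= -(perm_uniq (permEl (perm_catC _ _))) mem_cat orbC -mem_cat.
rewrite (word_mx (p1 := AND (take (hf S) S)) (p2 := AND (drop (hf S) S))) //.
- apply: uctrl_ext => v; by rewrite -all_cat cat_take_drop.
- by move=> v b; rewrite AND_setb.
- by move=> v b; rewrite AND_setb.
- apply: mcx_mx => //; rewrite size_take size_drop; case: ltnP => //; lia.
- apply: mcx_mx => //; rewrite size_take size_drop; case: ltnP => //; lia.
Qed.
End MCW.

Lemma conjD1 (z : C) : (z + 1)^* = z^* + 1.
Proof. by rewrite rmorphD rmorph1. Qed.
Lemma conjN (z : C) : (- z)^* = - z^*.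
Proof. by rewrite rmorphN. Qed.

Lemma unitcN z : unitc z -> unitc (- z).
Proof. by rewrite /unitc conjN mulrNN. Qed.

Lemma normc1 z : unitc z -> `|z| = 1.
Proof.
move=> H; have : `|z| ^+ 2 = 1 by rewrite normCK.
move/eqP; rewrite sqrf_eq1 => /orP[/eqP //|/eqP E].
by have := normr_ge0 z; rewrite E oppr_ge0 ler10.
Qed.

Definition rt (l : C) := if 0 <= 'Re (sqrtC l) then sqrtC l else - sqrtC l.

Lemma rt_sq l : rt l ^+ 2 = l.
Proof. by rewrite /rt; case: ifP; rewrite ?sqrrN sqrtCK. Qed.

Lemma rt_unit l : unitc l -> unitc (rt l).
Proof.
by move=> H; rewrite /rt; case: ifP => _; [|apply: unitcN]; apply: unitc_sqrt.
Qed.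

Lemma rt_Re l : 0 <= 'Re (rt l).
Proof.
rewrite /rt; case: ifP => // H; rewrite raddfN oppr_ge0 /=.
have Hr := Creal_Re (sqrtC l).
by apply: ltW; rewrite real_ltNge // ?H // real0.
Qed.

Lemma rt_close l : unitc l -> `|rt l - 1| ^+ 2 * 2 <= `|l - 1| ^+ 2.
Proof.
move=> Hl; set r := rt l.
have Hr : unitc r by apply: rt_unit.
have Hre : 0 <= r + r^*.
  have := rt_Re l; rewrite -/r ReE => H.
  by have := mulr_ge0 H (ler0n _ 2); rewrite -mulrA mulVf ?pnatr_eq0 // mulr1.
rewrite -(rt_sq l) -/r.
have -> : r ^+ 2 - 1 = (r - 1) * (r + 1) by ring.
rewrite normrM exprMn; apply: ler_wpM2l; first exact: exprn_ge0 (normr_ge0 _).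
rewrite normCK conjD1.
have -> : (r + 1) * (r^* + 1) = r * r^* + (r + r^*) + 1 by ring.
rewrite Hr; have -> : 1 + (r + r^*) + 1 = 2 + (r + r^*) by ring.
by rewrite lerDl.
Qed.

Section Main.
Variable nc : nat.
Local Notation n := nc.+1.
Definition tq : 'I_n := ord_max.
Definition ctl (j : nat) : 'I_n := inord j.
Definition Sk k := map ctl (iota 0 k).

Lemma ctlK j : (j <= nc)%N -> nat_of_ord (ctl j) = j.
Proof. by move=> H; rewrite /ctl inordK. Qed.

Lemma mem_Sk k (q : 'I_n) : (k <= nc.+1)%N -> (q \in Sk k) = (nat_of_ord q < k)%N.
Proof.
move=> Hk; apply/mapP/idP => [[j Hj ->]|Hq].
  by move: Hj; rewrite mem_iota add0n /ctl => /andP[_ Hj]; rewrite inordK //; lia.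
by exists (nat_of_ord q); rewrite ?mem_iota ?Hq // /ctl inord_val.
Qed.

Lemma Sk_uniq k : (k <= nc.+1)%N -> uniq (Sk k).
Proof.
move=> Hk; rewrite map_inj_in_uniq ?iota_uniq // => x y.
rewrite !mem_iota !add0n /ctl => /andP[_ Hx] /andP[_ Hy] /(congr1 (@nat_of_ord _)).
by rewrite !inordK //; lia.
Qed.

Lemma size_Sk k : size (Sk k) = k.
Proof. by rewrite size_map size_iota. Qed.

Lemma uniq_tq k : (k <= nc)%N -> uniq (tq :: Sk k).
Proof.
move=> Hk; rewrite /= Sk_uniq; last lia.
rewrite mem_Sk; last lia.
by rewrite andbT /tq /= -leqNgt.
Qed.

Lemma uniq_ctl k : (k < nc)%N -> uniq (ctl k :: Sk k).
Proof.
move=> Hk; rewrite /= Sk_uniq; last lia.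
rewrite mem_Sk; last lia.
rewrite andbT ctlK ?ltnn //; lia.
Qed.

Lemma AND_SkS k v : AND (Sk k.+1) v = AND (Sk k) v && v (ctl k).
Proof.
have E : iota 0 k.+1 = iota 0 k ++ [:: k] by rewrite -addn1 iotaD.
by rewrite /Sk E map_cat /AND all_cat /= andbT.
Qed.

Lemma Dg_ext (phi psi : st n -> C) : (forall v, phi v = psi v) -> Dg phi = Dg psi.
Proof. by move=> H; apply: mxs_ext => s v; rewrite H. Qed.

Lemma Dg1 : Dg (fun _ : st n => 1) = 1%:M.
Proof.
apply/matrixP => x y; rewrite !mxE mulr1 (inj_eq (@bits_inj _)).
by [].
Qed.

Fixpoint pch (k : nat) (l : C) (f : nat) : circuit n :=
  match k with
  | 0 => sg tq (l *: 1%:M)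
  | k'.+1 => match f with
             | 0 => [::]
             | f'.+1 => mcw (Sk k') (ctl k') (sqrtC ((rt l)^*)) ++ pch k' (rt l) f'
             end
  end.

Lemma pch_cnt k l f : (k <= nc)%N -> (cnot_count (pch k l f) <= 48 * nc * f)%N.
Proof.
elim: k l f => [|k IH] l f Hk; first by rewrite /= sg_cnt.
case: f => [|f] //=.
rewrite cnot_count_cat; have := mcw_cnt (Sk k) (ctl k) (sqrtC (rt l)^*).
have := IH (rt l) f (ltnW Hk); rewrite size_Sk; nia.
Qed.

Lemma pch_spec k : (k <= nc)%N -> forall l f, unitc l ->
  exists phi, circuit_mx (pch k l f) = Dg phi /\
    forall v, `|phi v - (if AND (Sk k) v then l else 1)| ^+ 2 * 2 ^+ f <= `|l - 1| ^+ 2.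
Proof.
elim: k => [|k IH] Hk l f Hl.
  exists (fun _ => l); split.
    rewrite /= sg_mx ?scale1_unitary // -dgc uctrl_dg //.
  by move=> v; rewrite /= subrr normr0 expr0n mul0r exprn_ge0 ?normr_ge0.
case: f => [|f].
  exists (fun _ => 1); split; first by rewrite /= Dg1.
  move=> v; rewrite expr0 mulr1; case: (AND _ _); last first.
    by rewrite subrr normr0 expr0n exprn_ge0 ?normr_ge0.
  by rewrite distrC.
set l' := rt l.
have Hl' : unitc l' by apply: rt_unit.
have [phi' [E' B']] := IH (ltnW Hk) l' f Hl'.
set nu := sqrtC (l'^*).
have Hnu : unitc nu by apply/unitc_sqrt/unitc_conj.
have Hnu2 : nu ^+ 2 = l'^* by apply: sqrtCK.
have Hnuc2 : nu^* ^+ 2 = l' by rewrite conjX2 Hnu2 conjCK.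
set psi := fun v : st n => if AND (Sk k) v then (if v (ctl k) then l' else l'^*) else 1.
exists (fun v => phi' v * psi v); split.
  change (circuit_mx (mcw (Sk k) (ctl k) nu ++ pch k l' f) = Dg (fun v => phi' v * psi v)).
  rewrite circuit_mx_cat E' mcw_mx ?uniq_ctl // -Dg_mul; congr (_ *m _).
  rewrite (uctrl_ext (G := fun v => dg (fun b => if AND (Sk k) v then
     (if b then l' else l'^*) else 1))); last first.
    by move=> v; rewrite if_dg; apply: dg_ext => -[]; rewrite ?Hnuc2 ?Hnu2.
  have Hq : ctl k \notin Sk k by case/andP: (uniq_ctl Hk).
  by rewrite uctrl_dg /psi; apply: Dg_ext => v; rewrite AND_setb.
move=> v.
have Hpsi : `|psi v| = 1.
  rewrite /psi; case: (AND _ _); last by rewrite normr1.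
  by case: (v _); apply: normc1 => //; apply: unitc_conj.
have -> : (if AND (Sk k.+1) v then l else 1) = (if AND (Sk k) v then l' else 1) * psi v.
  rewrite AND_SkS /psi; case: (AND _ _); rewrite ?mul1r //=.
  case: (v _); first by rewrite -expr2 rt_sq.
  by rewrite Hl'.
rewrite -mulrBl normrM Hpsi mulr1 [X in _ * X <= _]exprSr mulrA.
apply: (le_trans _ (rt_close Hl)); rewrite -/l'.
by apply: ler_wpM2r; [rewrite ler0n | apply: B'].
Qed.
End Main.

Lemma qbit_lo x a m k : (x < 2 ^ m)%N -> (k < m)%N -> qbit (x + a * 2 ^ m) k = qbit x k.
Proof.
move=> Hx Hk; rewrite /qbit.
have -> : (a * 2 ^ m = (a * 2 ^ (m - k)) * 2 ^ k)%N by rewrite -mulnA -expnD subnK // ltnW.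
rewrite divnDMl ?expn_gt0 // oddD oddM oddX.
have -> : (m - k == 0)%N = false by apply/eqP; lia.
by rewrite /= andbF addbF.
Qed.

Lemma qbit_hi x (a : 'I_2) m : (x < 2 ^ m)%N -> qbit (x + a * 2 ^ m) m = (a != ord0).
Proof.
move=> Hx; rewrite /qbit divnDMl ?expn_gt0 // divn_small // add0n.
by case: a => [[|[|a]] Ha].
Qed.

Lemma qbit_full m j : (j < m)%N -> qbit (2 ^ m).-1 j.
Proof.
move=> Hj; rewrite /qbit.
have E : ((2 ^ m).-1 = (2 ^ (m - j)).-1 * 2 ^ j + (2 ^ j).-1)%N.
  have H1 : (0 < 2 ^ (m - j))%N by rewrite expn_gt0.
  have H2 : (0 < 2 ^ j)%N by rewrite expn_gt0.
  have H3 : (2 ^ m = 2 ^ (m - j) * 2 ^ j)%N by rewrite -expnD subnK // ltnW.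
  rewrite H3; move: (2 ^ (m - j))%N (2 ^ j)%N H1 H2 => p q H1 H2; nia.
rewrite E divnMDl ?expn_gt0 // divn_small ?addn0; last first.
  by rewrite prednK ?expn_gt0.
have : (0 < m - j)%N by lia.
case: (m - j)%N => // e _; rewrite expnS.
have Hp : (0 < 2 ^ e)%N by rewrite expn_gt0.
move: (2 ^ e)%N Hp => p Hp; case: p Hp => // p _.
have -> : ((2 * p.+1).-1 = (2 * p).+1)%N by lia.
by rewrite /= oddM.
Qed.

Lemma qbit_all_full m x : (x < 2 ^ m)%N ->
  (forall j, (j < m)%N -> qbit x j) <-> x = (2 ^ m).-1.
Proof.
move=> Hx; split => [H|->]; last exact: qbit_full.
apply: (@qbit_inj_nat m) => //; first by rewrite prednK ?expn_gt0.
by move=> k Hk; rewrite H // qbit_full.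
Qed.

Section Idx.
Variable nc : nat.
Implicit Types (x y : 'I_(2 ^ nc)) (a b : 'I_2).

Lemma bits_idx_tq x a : bits (idx x a) (tq nc) = (a != ord0).
Proof. by rewrite ffunE /tq /= qbit_hi. Qed.

Lemma bits_idx_lo x a (k : 'I_nc.+1) : k != tq nc -> bits (idx x a) k = qbit x k.
Proof.
move=> Hk; rewrite ffunE /= qbit_lo //.
by move: Hk; rewrite /tq; case: k => k Hk /=; rewrite -val_eqE /=; lia.
Qed.

Lemma agree_idx x a y b : agree (tq nc) (bits (idx x a)) (bits (idx y b)) = (x == y).
Proof.
apply/agreeP/eqP => [H|->]; last first.
  by move=> k Hk; rewrite !bits_idx_lo.
apply: val_inj; apply: (@qbit_inj_nat nc); [exact: ltn_ord | exact: ltn_ord |] => j Hj.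
have Hk : (inord j : 'I_nc.+1) != tq nc.
  by rewrite /tq -val_eqE /= inordK //; lia.
have := H _ Hk; rewrite !bits_idx_lo // inordK //; lia.
Qed.

Lemma AND_idx x a : AND (Sk nc nc) (bits (idx x a)) = (val x == (2 ^ nc).-1)%N.
Proof.
have E : AND (Sk nc nc) (bits (idx x a)) = all (fun j => qbit x j) (iota 0 nc).
  rewrite /AND /Sk all_map; apply: eq_in_all => j; rewrite mem_iota add0n => /andP[_ Hj] /=.
  rewrite bits_idx_lo; first by rewrite ctlK //; lia.
  by rewrite /tq -val_eqE /= ctlK; lia.
rewrite E; apply/allP/eqP => [H|H].
  apply/(qbit_all_full (ltn_ord x)) => j Hj; apply: H; rewrite mem_iota; lia.
move=> j; rewrite mem_iota add0n => /andP[_ Hj].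
by move/(qbit_all_full (ltn_ord x)): H; apply.
Qed.
End Idx.

Lemma dg_unitc f b : dg f \is unitarymx -> unitc (f b).
Proof.
move/unitarymxP => H; have := congr1 (fun M => ent M b b) H.
rewrite ent_mul !ent_tc !ent_mk2 ent1.
by case: b; rewrite /= ?mulr1n ?mulr0n ?mul1r ?mul0r ?rmorph0 ?mulr0 ?addr0 ?add0r.
Qed.

Lemma unitary_entry (M : 'M[C]_2) a b : M \is unitarymx -> `|M a b| <= 1.
Proof.
move/unitarymxP => H; have := congr1 (fun M => ent M (a != ord0) (a != ord0)) H.
rewrite ent_mul !ent_tc ent1 eqxx /= /ent !b2oK => E.
have H0 : `|M a (b2o false)| ^+ 2 + `|M a (b2o true)| ^+ 2 = 1 by rewrite !normCK.
have Hb : `|M a b| ^+ 2 <= 1.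
  rewrite -H0 -(b2oK b); case: (b != ord0).
    by rewrite lerDr exprn_ge0 ?normr_ge0.
  by rewrite lerDl exprn_ge0 ?normr_ge0.
by rewrite -(ler_sqr (normr_ge0 _)) ?expr1n // qualifE /= ler01.
Qed.

Lemma ent_scale (c : C) (M : 'M[C]_2) a b : ent (c *: M) a b = c * ent M a b.
Proof. by rewrite /ent mxE. Qed.

Lemma conjM (z w : C) : (z * w)^* = z^* * w^*.
Proof. by rewrite rmorphM. Qed.

Lemma exists_m (eps : R) : 0 < eps -> exists m : nat, (4 : C) <= (eps%:C)%C ^+ 2 * 2 ^+ m.
Proof.
move=> he.
have he2 : 0 < eps ^+ 2 by rewrite exprn_gt0.
set r := 4 / eps ^+ 2.
have hr : 0 <= r by rewrite /r divr_ge0 ?ler0n // ltW.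
set N := Num.Def.archi_bound r.
have H1 := archi_boundP hr.
have H2 : (N%:R : R) <= 2 ^+ N by rewrite -natrX ler_nat ltnW // ltn_expl.
have H3 : r <= 2 ^+ N by apply: le_trans (ltW H1) H2.
have H4 : (4 : R) <= eps ^+ 2 * 2 ^+ N.
  have -> : (4 : R) = eps ^+ 2 * r by rewrite /r mulrC -mulrA mulVf ?mulr1 // gt_eqF.
  by rewrite ler_wpM2l // ltW.
exists N.
have : ((4 : R)%:C <= (eps ^+ 2 * 2 ^+ N)%:C)%C by rewrite lecR.
by rewrite rmorphM !rmorphXn !rmorph_nat.
Qed.

Theorem corollary1 (U : 'M[C]_2) (hU : U \is unitarymx) (eps : R) (heps : 0 < eps) :
  exists K : nat, forall nc : nat,
    exists c : circuit nc.+1,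
      (cnot_count c <= K * nc.+1)%N /\ approx_CnU U eps (circuit_mx c).
Proof.
have hUn : U \is normalmx.
  apply/normalmxP; rewrite (unitarymxP hU); apply/esym/mulmx1C/unitarymxP.
  exact: hU.
set P := spectralmx U; set sp := spectral_diag U.
have hP : P \is unitarymx := spectral_unitarymx U.
have hPc : P^t* \is unitarymx by rewrite trmxC_unitary.
have EU : U = P^t* *m diag_mx sp *m P.
  by rewrite -invmx_unitary //; apply/orthomx_spectralP.
have PPc : P *m P^t* = 1%:M by apply/unitarymxP.
have PcP : P^t* *m P = 1%:M by apply: mulmx1C.
set d := fun b => sp ord0 (b2o b).
have ED : diag_mx sp = dg d.
  apply: mx2_ext => a b; rewrite [RHS]ent_mk2 /ent mxE (inj_eq b2o_inj) mulr_natl.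
  by [].
have HDu : dg d \is unitarymx.
  have -> : dg d = P *m U *m P^t*.
    by rewrite EU !mulmxA PPc mul1mx -mulmxA PPc mulmx1 ED.
  by rewrite !mul_unitarymx.
have Hd : forall b, unitc (d b) by move=> b; apply: dg_unitc.
set mu := sqrtC (d false * d true).
have Hmu : unitc mu by apply/unitc_sqrt/unitc_mul.
set ka := d false * mu^*.
have Hka : unitc ka by apply/unitc_mul/unitc_conj.
set W0 := dg (fun b => if b then ka^* else ka).
have EDW : dg d = mu *: W0.
  apply: mx2_ext => a b; rewrite /W0 ent_scale !ent_mk2.
  case: a; case: b; rewrite /= ?mulr1n ?mulr0n ?mul0r ?mulr0 ?mul1r //.
    rewrite /ka conjM conjCK.
    have -> : mu * ((d false)^* * mu) = mu ^+ 2 * (d false)^* by ring.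
    rewrite sqrtCK.
    have -> : d false * d true * (d false)^* = (d false * (d false)^*) * d true by ring.
    by rewrite Hd mul1r.
  rewrite /ka.
  have -> : mu * (d false * mu^*) = d false * (mu * mu^*) by ring.
  by rewrite Hmu mulr1.
set nu := sqrtC ka.
have Hnu : unitc nu by apply: unitc_sqrt.
have Hnu2 : nu ^+ 2 = ka by apply: sqrtCK.
have Hnuc2 : nu^* ^+ 2 = ka^* by rewrite conjX2 Hnu2.
have [m Hm] := exists_m heps.
exists (48 * m.+1)%N => nc.
set c := sg (tq nc) P ++ mcw (Sk nc nc) (tq nc) nu ++ sg (tq nc) (P^t*) ++ pch nc nc mu m.
exists c; split.
  rewrite /c !cnot_count_cat !sg_cnt.
  have := mcw_cnt (Sk nc nc) (tq nc) nu; have := @pch_cnt nc nc mu m (leqnn nc).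
  rewrite size_Sk; nia.
have [phi [Ephi Bphi]] := @pch_spec nc nc (leqnn nc) mu m Hmu.
have Hut := uniq_tq (leqnn nc).
have Htq : tq nc \notin Sk nc nc by case/andP: Hut.
set Fm := fun v : st nc.+1 => if AND (Sk nc nc) v then P^t* *m W0 *m P else 1%:M.
have EM : circuit_mx c = mxs (fun s v => phi s * (if agree (tq nc) s v then
    ent (Fm (setb (tq nc) false v)) (s (tq nc)) (v (tq nc)) else 0)).
  rewrite /c !circuit_mx_cat Ephi mcw_mx // !sg_mx // -!mulmxA !uctrl_mul.
  rewrite (uctrl_ext (G := Fm)); first by rewrite /uctrl Dg_mxs.
  move=> v; rewrite /Fm; case: (AND _ _); last by rewrite mul1mx PcP.
  rewrite mulmxA; congr (_ *m _ *m _); rewrite /W0; apply: dg_ext => -[].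
    exact: Hnuc2.
  exact: Hnu2.
have Heps : 0 <= (eps%:C)%C by rewrite ler0c ltW.
have Hmu1 : `|mu - 1| ^+ 2 <= 4.
  have : `|mu - 1| <= 2 by apply: le_trans (ler_normB _ _) _; rewrite normc1 // normr1.
  move=> H; have := lerXn2r 2 (normr_ge0 _) (ler0n _ 2) H.
  by rewrite (_ : (2 : C) ^+ 2 = 4) // expr2 -natrM.
have Hb : forall v, `|phi v - (if AND (Sk nc nc) v then mu else 1)| <= (eps%:C)%C.
  move=> v; have H := Bphi v.
  have H2 : `|phi v - (if AND (Sk nc nc) v then mu else 1)| ^+ 2 * 2 ^+ m <=
            (eps%:C)%C ^+ 2 * 2 ^+ m.
    by apply: le_trans H _; apply: le_trans Hmu1 Hm.
  rewrite ler_pM2r ?exprn_gt0 ?ltr0n // in H2.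
  by rewrite -(ler_sqr (normr_ge0 _)) // qualifE /=.
have HW0 : W0 \is unitarymx.
  by apply: dg_unitary => -[]; [apply: unitc_conj|].
have Hent : forall a b, `|(P^t* *m W0 *m P) a b| <= 1.
  by move=> a b; apply: unitary_entry; rewrite !mul_unitarymx.
have H1ent : forall a b, `|(1%:M : 'M[C]_2) a b| <= 1.
  move=> a b; apply: unitary_entry; apply/unitarymxP.
  by rewrite mul1mx trmx1 map_mx1.
split.
  by move=> x y a b Hxy; rewrite EM mxE agree_idx (negbTE Hxy) mulr0.
move=> x V a b; rewrite /V mxE EM mxE agree_idx eqxx !bits_idx_tq.
rewrite /Fm AND_setb // AND_idx /ent !b2oK.
have := Hb (bits (idx x a)); rewrite AND_idx.
case: eqP => _ Hbx.
  rewrite EU ED EDW -scalemxAr -scalemxAl [X in _ - X]mxE -mulrBl normrM.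
  by rewrite -[(eps%:C)%C]mulr1 ler_pM ?normr_ge0.
rewrite -{2}[(1%:M : 'M[C]_2) a b]mul1r -mulrBl normrM.
by rewrite -[(eps%:C)%C]mulr1 ler_pM ?normr_ge0.
Qed.
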